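(* Let $\omega\in S_n$ and $1\le i<j\le n$ with $c_i(\omega),c_j(\omega)>0$. If $m_{i,p}(\omega)>m_{j,q}(\omega)$ for some $p\in[c_i(\omega)]$ and $q\in[c_j(\omega)]$, then $\{k: j<k\le n,\ \omega(i)>\omega(k)\}\subseteq\{l: j<l\le n,\ \omega(j)>\omega(l)\}$.
   Context: Permutations $\omega\in S_n$ are written in one-line notation. Let ${\rm Inv}(\omega)=\{(i,j): 1\le i<j\le n,\ \omega(i)>\omega(j)\}$, $c_i(\omega)=\#\{j: i<j\le n,\ \omega(i)>\omega(j)\}$, and for $i<j$, $c_{i,j}(\omega)=\#\{k: i<k<j,\ \omega(i)>\omega(k)\}$; $[m]=\{1,\dots,m\}$. For $i$ with $c_i(\omega)>0$ and $x\in[c_i(\omega)]$, $m_{i,x}(\omega)\in\mathbb{N}^n$ has $j$-th coordinate $0$ if $j<i$; $x$ if $j=i$; $0$ if $j>i$ and $(i,j)\in{\rm Inv}(\omega)$; $\max\{0,x-c_{i,j}(\omega)\}$ if $j>i$ and $(i,j)\notin{\rm Inv}(\omega)$. Comparisons are strict comparisons in the product order on $\mathbb{N}^n$. *)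

(* Defs.v *)
(* Positions [n] = {1..n} are represented by 'I_n (0-based,
   order-preserving relabeling); permutations of S_n by 'S_n. *)
From mathcomp Require Import all_boot all_order all_fingroup.
Set Implicit Arguments. Unset Strict Implicit. Unset Printing Implicit Defensive.

Definition inv_pair (n : nat) (w : 'S_n) (i j : 'I_n) : bool :=
  (i < j) && (w j < w i).

Definition code (n : nat) (w : 'S_n) (i : 'I_n) : nat :=
  #|[set j : 'I_n | (i < j) && (w j < w i)]|.

Definition code2 (n : nat) (w : 'S_n) (i j : 'I_n) : nat :=
  #|[set k : 'I_n | [&& i < k, k < j & w k < w i]]|.

Definition mvec (n : nat) (w : 'S_n) (i : 'I_n) (x : nat) (j : 'I_n) : nat :=
  if j < i then 0
  else if j == i then x
  else if inv_pair w i j then 0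
  else x - code2 w i j.   (* truncated subtraction = max{0, x - c_{i,j}} *)

Definition prod_gt (n : nat) (a b : 'I_n -> nat) : Prop :=
  (forall k, b k <= a k) /\ (exists k, b k < a k).

(* Main.v *)
Require Import Defs.
From mathcomp Require Import all_boot all_order all_fingroup.

Theorem mainTheorem4 (n : nat) (w : 'S_n) (i j : 'I_n) :
  i < j -> 0 < code w i -> 0 < code w j ->
  (exists p q : nat,
      [/\ 1 <= p <= code w i, 1 <= q <= code w j &
          prod_gt (mvec w i p) (mvec w j q)]) ->
  [set k : 'I_n | (j < k) && (w k < w i)] \subset
  [set l : 'I_n | (j < l) && (w l < w j)].
Proof.
move=> hij _ _ [p [q [_ /andP[hq _] [hle _]]]].
have := hle j.
rewrite /mvec ltnn eqxx.
have -> : (j < i) = false by apply/negbTE; rewrite -leqNgt ltnW.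
have -> : (j == i) = false by apply/negbTE; rewrite neq_ltn hij orbT.
rewrite /Defs.inv_pair hij /=.
case: ifP => [_|hw _]; first by rewrite leqn0 => /eqP Hq; rewrite Hq in hq.
have hwij : w i < w j.
  rewrite ltn_neqAle leqNgt hw andbT.
  apply/negP => /eqP /val_inj /perm_inj Hij.
  by rewrite Hij ltnn in hij.
apply/subsetP => k; rewrite !inE => /andP[-> hk] /=.
exact: ltn_trans hk hwij.
Qed.
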